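(* Let $\mathbf G$ and $\widetilde{\mathbf G}$ be finite oriented metric graphs, where $\widetilde{\mathbf G}$ is obtained from $\mathbf G$ by reversing the orientation of the edges in a subset $\mathcal J_-\subset\mathcal J$ (as described in the context), let $\Lambda$ be a linear relation in their common vertex space $\mathcal F$, let $D^{\Lambda_W}$ be the restriction of $D^{max}$ to $\{\Phi\in\widetilde H^1(\mathbf G;\mathbb C^2):(W\Gamma^1\Phi,W\Gamma^2\Phi)\in\Lambda\}$ and $\widetilde D^{\Lambda_{\widetilde W}}$ the restriction of $\widetilde D^{max}$ to $\{\widetilde\Phi\in\widetilde H^1(\widetilde{\mathbf G};\mathbb C^2):(\widetilde W\widetilde\Gamma^1\widetilde\Phi,\widetilde W\widetilde\Gamma^2\widetilde\Phi)\in\Lambda\}$. Then $$\widetilde D^{\Lambda_{\widetilde W}}P_{\mathcal J_-}=P_{\mathcal J_-}D^{\Lambda_W}.$$ In particular, $\widetilde D^{\Lambda_{\widetilde W}}$ and $D^{\Lambda_W}$ are unitarily equivalent.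
   Context: Let $m\ge0$. A finite oriented metric graph has a finite nonempty vertex set $\mathcal V$, finite sets $\mathcal I$ (internal) and $\mathcal E$ (external) of edges, $\mathcal J=\mathcal I\cup\mathcal E\ne\emptyset$, no loops. Each internal edge $i$ has initial vertex $\partial_-i$ and terminal vertex $\partial_+i$ and is identified with $I_i=(a_i,b_i)$, $a_i\leftrightarrow\partial_-i$, $b_i\leftrightarrow\partial_+i$. An external edge $e$ attached to a vertex is identified with $(a_e,+\infty)$ if the vertex is its initial vertex ($\rho(e)=-1$) or with $(-\infty,b_e)$ if it is its terminal vertex ($\rho(e)=1$); $\partial e$ is the finite endpoint. Data on a graph: $\mathscr H=\bigoplus_jL^2(I_j;\mathbb C^2)$; $\widetilde H^1=\bigoplus_jH^1(I_j;\mathbb C^2)$; $D^{max}$ acts edgewise by $-i\sigma_1\phi_j'+m\sigma_3\phi_j$ ($\sigma_1=\begin{pmatrix}0&1\\1&0\end{pmatrix}$, $\sigma_3=\operatorname{diag}(1,-1)$); $\mathcal G=\bigoplus_j\mathcal G_j$, $\mathcal G_i=\mathbb C^2$, $\mathcal G_e=\mathbb C$; $\Gamma^1_i\Phi=(\phi_i^1(a_i),\phi_i^1(b_i))^T$, $\Gamma^2_i\Phi=(i\phi_i^2(a_i),-i\phi_i^2(b_i))^T$, $\Gamma^1_e\Phi=\phi_e^1(\partial e)$, $\Gamma^2_e\Phi=-i\rho(e)\phi^2_e(\partial e)$, $\Gamma^k=\bigoplus_j\Gamma^k_j$; vertex space $\mathcal F=\bigoplus_v\mathbb C^{\deg v}$;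 coordinates of $\mathcal G$ and $\mathcal F$ are labelled by pairs $(j,v)$, $v$ a vertex endpoint of $j$; in $\mathcal G$ ordered edge by edge in a fixed edge order (for internal edges the pair with the initial vertex first), in $\mathcal F$ vertex by vertex in a fixed vertex order and within a vertex by the fixed edge order; $W:\mathcal G\to\mathcal F$ is the permutation matrix sending coordinate $(j,v)$ of $\mathcal G$ to coordinate $(j,v)$ of $\mathcal F$. The graph $\widetilde{\mathbf G}$ has the same vertices and edges (with the same fixed orders) but for $j\in\mathcal J_-$ the initial and terminal vertices are swapped; an edge $j\in\mathcal J_-$ with interval $(a,b)$ in $\mathbf G$ (where $a$ or $b$ may be infinite) gets the interval $(-b,-a)$ in $\widetilde{\mathbf G}$, while edges in $\mathcal J\setminus\mathcal J_-$ keep their intervals. $\widetilde{\mathscr H},\widetilde D^{max},\widetilde\Gamma^1,\widetilde\Gamma^2,\widetilde W$ are defined by the same rules for $\widetilde{\mathbf G}$ (so $\mathcal F$ and its ordering coincide, but in $\widetilde{\mathcal G}=\mathcal G$ the order of the two pairs belonging to an internal edge in $\mathcal J_-$ is swapped). $P_{\mathcal J_-}:\mathscr H\to\widetilde{\mathscr H}$ is $\bigoplus_jP_{\mathcal J_-,j}$ with $P_{\mathcal J_-,j}$ the identity for $j\notin\mathcal J_-$ and $(P_{\mathcal J_-,j}\phi)(\tilde x)=\sigma_3\phi(-\tilde x)$ for $j\in\mathcal J_-$. *)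

(* Defs.v *)
From mathcomp Require Import all_boot all_order all_algebra.
From mathcomp Require Import all_classical all_reals all_analysis.
Import Order.TTheory GRing.Theory Num.Theory.
From mathcomp Require Import complex.
Set Implicit Arguments. Unset Strict Implicit. Unset Printing Implicit Defensive.
Local Open Scope ring_scope.
Local Open Scope classical_set_scope.

(* A finite oriented metric graph.
   internal edge i : identified with (ia i, ib i), initial vertex src i, terminal tgt i.
   external edge e : attached at vertex eatt e, with finite endpoint ept e;
     einit e = true  : eatt e is the initial vertex (rho(e) = -1), interval (ept e, +oo)
     einit e = false : eatt e is the terminal vertex (rho(e) = 1), interval (-oo, ept e). *)
Record mgraph (R : realType) := MGraph {
  vert : finType; iedge : finType; eedge : finType;
  src : iedge -> vert; tgt : iedge -> vert;
  ia : iedge -> R; ib : iedge -> R;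
  eatt : eedge -> vert; einit : eedge -> bool; ept : eedge -> R }.
Arguments vert {R} G : rename. Arguments iedge {R} G : rename. Arguments eedge {R} G : rename.
Arguments src {R} G _ : rename. Arguments tgt {R} G _ : rename. Arguments ia {R} G _ : rename. Arguments ib {R} G _ : rename.
Arguments eatt {R} G _ : rename. Arguments einit {R} G _ : rename. Arguments ept {R} G _ : rename.

Notation edge G := (iedge G + eedge G)%type.

Definition wf (R : realType) (G : mgraph R) : Prop :=
  [/\ (0 < #|{: vert G}|)%N, (forall i, src G i != tgt G i),
      (forall i, ia G i < ib G i) & (0 < #|{: iedge G}| + #|{: eedge G}|)%N].

Definition revG (R : realType) (G : mgraph R) (Jm : {set edge G}) : mgraph R :=
  @MGraph R (vert G) (iedge G) (eedge G)
    (fun i => if inl i \in Jm then tgt G i else src G i)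
    (fun i => if inl i \in Jm then src G i else tgt G i)
    (fun i => if inl i \in Jm then - ib G i else ia G i)
    (fun i => if inl i \in Jm then - ia G i else ib G i)
    (eatt G)
    (fun e => if inr e \in Jm then ~~ einit G e else einit G e)
    (fun e => if inr e \in Jm then - ept G e else ept G e).

Definition Ij (R : realType) (G : mgraph R) (j : edge G) : set R :=
  match j with
  | inl i => [set` `]ia G i, ib G i[]
  | inr e => if einit G e then [set` `]ept G e, +oo[] else [set` `]-oo, ept G e[]
  end.
Definition Kj (R : realType) (G : mgraph R) (j : edge G) : set R :=
  match j with
  | inl i => [set` `[ia G i, ib G i]]
  | inr e => if einit G e then [set` `[ept G e, +oo[] else [set` `]-oo, ept G e]]
  end.

Arguments Ij {R} G j. Arguments Kj {R} G j.

Definition state (R : realType) (G : mgraph R) := edge G -> R -> R[i] * R[i].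

Definition mu (R : realType) := @lebesgue_measure R.
Arguments mu R : clear implicits.

Definition L2r (R : realType) (D : set R) (f : R -> R) : Prop :=
  measurable_fun D f /\ (\int[mu R]_(x in D) ((f x) ^+ 2)%:E < +oo)%E.
Definition L2c (R : realType) (D : set R) (f : R -> R[i]) : Prop :=
  L2r D (fun x => Re (f x)) /\ L2r D (fun x => Im (f x)).
Definition L2 (R : realType) (G : mgraph R) (Phi : state G) : Prop :=
  forall j, L2c (Ij G j) (fun x => (Phi j x).1) /\ L2c (Ij G j) (fun x => (Phi j x).2).

Definition ACr (R : realType) (K : set R) (f g : R -> R) : Prop :=
  forall x y, K x -> K y -> x <= y ->
    (\int[mu R]_(t in [set` `[x, y]]) (g t)%:E = (f y - f x)%:E)%E.
(* f in H^1(I) (represented by its continuous representative on the closure K of I),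
   with (weak) derivative g *)
Definition H1c (R : realType) (I K : set R) (f g : R -> R[i]) : Prop :=
  [/\ L2c I f, L2c I g, ACr K (fun x => Re (f x)) (fun x => Re (g x))
    & ACr K (fun x => Im (f x)) (fun x => Im (g x))].

Definition aeq (R : realType) (T : Type) (D : set R) (f g : R -> T) : Prop :=
  {ae mu R, forall x, D x -> f x = g x}.

(* coordinates of the space cal G: one per end (j,v) of an edge:
   inl (i,false) = (i, initial vertex), inl (i,true) = (i, terminal vertex), inr e = (e, ∂e) *)
Definition ends (R : realType) (G : mgraph R) := (iedge G * bool + eedge G)%type.

Definition rho (R : realType) (G : mgraph R) (e : eedge G) : R[i] :=
  if einit G e then -1 else 1.

Definition Gam1 (R : realType) (G : mgraph R) (Phi : state G) (k : ends G) : R[i] :=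
  match k with
  | inl (i, false) => (Phi (inl i) (ia G i)).1
  | inl (i, true) => (Phi (inl i) (ib G i)).1
  | inr e => (Phi (inr e) (ept G e)).1
  end.
Definition Gam2 (R : realType) (G : mgraph R) (Phi : state G) (k : ends G) : R[i] :=
  match k with
  | inl (i, false) => ('i%C * (Phi (inl i) (ia G i)).2)
  | inl (i, true) => (- 'i%C * (Phi (inl i) (ib G i)).2)
  | inr e => (- 'i%C * rho e * (Phi (inr e) (ept G e)).2)
  end.

(* incidence and the index set of the vertex space F = (+)_v C^{deg v}:
   coordinates labelled by pairs (j,v) with v a vertex endpoint of j *)
Definition inc (R : realType) (G : mgraph R) (j : edge G) (v : vert G) : bool :=
  match j with
  | inl i => (v == src G i) || (v == tgt G i)
  | inr e => v == eatt G e
  end.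
Definition Fidx (R : realType) (G : mgraph R) := {p : edge G * vert G | inc p.1 p.2}.

Definition end_at (R : realType) (G : mgraph R) (j : edge G) (v : vert G) : ends G :=
  match j with
  | inl i => inl (i, v != src G i)
  | inr e => inr e
  end.
(* W : cal G -> F, sending coordinate (j,v) of cal G to coordinate (j,v) of F;
   lab gives the label (j,v) of each coordinate of F *)
Definition Wmap (R : realType) (G : mgraph R) (K : finType) (lab : K -> edge G * vert G)
  (x : ends G -> R[i]) : K -> R[i] := fun k => x (end_at (lab k).1 (lab k).2).

Definition lin_rel (R : realType) (K : Type) (Lam : (K -> R[i]) -> (K -> R[i]) -> Prop) : Prop :=
  Lam (fun _ => 0) (fun _ => 0) /\
  forall (a : R[i]) x y x' y', Lam x y -> Lam x' y' ->
    Lam (fun k => a * x k + x' k) (fun k => a * y k + y' k).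

(* -i sigma_1 phi' + m sigma_3 phi, with u = phi(x), v = phi'(x) *)
Definition Dmax (R : realType) (m : R) (u v : R[i] * R[i]) : R[i] * R[i] :=
  (- 'i%C * v.2 + m%:C%C * u.1, - 'i%C * v.1 - m%:C%C * u.2).

(* graph of the operator D^{Lambda_W}: (Phi, Psi) with Phi in its domain and
   D^{Lambda_W} Phi = Psi, as elements of H (i.e. up to a.e. equality) *)
Definition DLam (R : realType) (G : mgraph R) (K : finType) (lab : K -> edge G * vert G)
  (Lam : (K -> R[i]) -> (K -> R[i]) -> Prop) (m : R) (Phi Psi : state G) : Prop :=
  [/\ L2 Phi, L2 Psi &
   exists Phi0 Phi1 : state G,
     [/\ forall j, aeq (Ij G j) (Phi0 j) (Phi j),
         forall j, H1c (Ij G j) (Kj G j) (fun x => (Phi0 j x).1) (fun x => (Phi1 j x).1)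
                /\ H1c (Ij G j) (Kj G j) (fun x => (Phi0 j x).2) (fun x => (Phi1 j x).2),
         Lam (Wmap lab (Gam1 Phi0)) (Wmap lab (Gam2 Phi0)) &
         forall j, aeq (Ij G j) (Psi j) (fun x => Dmax m (Phi0 j x) (Phi1 j x))]].

Definition Pmap (R : realType) (G : mgraph R) (Jm : {set edge G}) (Phi : state G) : state G :=
  fun j x => if j \in Jm then ((Phi j (- x)).1, - (Phi j (- x)).2) else Phi j x.

Definition sqn (R : realType) (u : R[i] * R[i]) : R :=
  Re u.1 ^+ 2 + Im u.1 ^+ 2 + Re u.2 ^+ 2 + Im u.2 ^+ 2.
Definition norm2 (R : realType) (G : mgraph R) (Phi : state G) : \bar R :=
  (\sum_(j : edge G) \int[mu R]_(x in Ij G j) (sqn (Phi j x))%:E)%E.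

(* Main.v *)
Require Import Defs.
From mathcomp Require Import all_boot all_order all_algebra.
From mathcomp Require Import all_classical all_reals all_analysis.
Import Order.TTheory GRing.Theory Num.Theory.
From mathcomp Require Import complex.
From HB Require Import structures.
From mathcomp Require Import lra.
From mathcomp Require Import measurable_realfun.
Local Open Scope ring_scope.
Local Open Scope classical_set_scope.



Section Refl.
Context {R : realType}.
Lemma mopp : measurable_fun (T:=measurableTypeR R) (U:=measurableTypeR R) setT (-%R).
Proof. exact: oppr_measurable. Qed.
Definition pfm : set (measurableTypeR R) -> \bar R :=
  @pushforward _ _ (measurableTypeR R) (measurableTypeR R) R (@lebesgue_measure R) (-%R).
Let pf0 : pfm set0 = 0%E.
Proof. by rewrite /pfm /pushforward preimage_set0 measure0. Qed.
Let pf_ge0 A : (0 <= pfm A)%E.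
Proof. exact: measure_ge0. Qed.
Let pf_sigma : semi_sigma_additive pfm.
Proof.
move=> F mF tF mUF; rewrite /pfm /pushforward preimage_bigcup.
apply: measure_semi_sigma_additive.
- by move=> n; rewrite -[X in measurable X]setTI; exact: mopp.
- apply/trivIsetP => /= i j _ _ ij; rewrite -preimage_setI.
  by move/trivIsetP : tF => /(_ _ _ _ _ ij) ->//; rewrite preimage_set0.
- by rewrite -preimage_bigcup -[X in measurable X]setTI; exact: mopp.
Qed.
HB.instance Definition _ := isMeasure.Build _ _ _ pfm pf0 pf_ge0 pf_sigma.


Lemma preimN_itv (a b : R) : (-%R) @^-1` `]a, b] = `[- b, - a[.
Proof.
by apply/seteqP; split=> x /=; rewrite !in_itv /= => /andP[h1 h2]; apply/andP; split; lra.
Qed.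

Lemma leb_opp (A : set R) : measurable A -> mu R ((-%R) @^-1` A) = mu R A.
Proof.
move=> mA; rewrite /mu; symmetry.
have := @lebesgue_measure_unique R pfm _ A mA; apply.
move=> X /ocitvP [->|[[a b]/= ab ->]].
  by rewrite !measure0.
rewrite /pfm /pushforward preimN_itv !lebesgue_measure_itv /= !lte_fin ltrN2 ab.
by rewrite -!EFinD opprK addrC.
Qed.

Lemma ae_opp (P : R -> Prop) : {ae mu R, forall x, P x} -> {ae mu R, forall x, P (- x)}.
Proof.
move=> [A [mA A0 sA]]; exists ((-%R) @^-1` A); split.
- by rewrite -[X in measurable X]setTI; exact: mopp.
- by rewrite leb_opp.
- by move=> x /= nP; apply: sA.
Qed.

Lemma int_opp (D : set R) (f : R -> \bar R) : measurable D -> measurable_fun D f ->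
  (\int[mu R]_(x in D) f x = \int[mu R]_(x in (-%R) @^-1` D) f (- x)%R)%E.
Proof.
move=> mD mf; rewrite integralE [RHS]integralE.
have H (h : R -> \bar R) : measurable_fun D h -> (forall y, 0 <= h y)%E ->
    (\int[mu R]_(x in D) h x = \int[mu R]_(x in (-%R) @^-1` D) h (- x)%R)%E.
  move=> mh h0.
  have := @ge0_integral_pushforward _ _ (measurableTypeR R) (measurableTypeR R) R (-%R) mopp
     (@lebesgue_measure R) D h mD mh (fun y _ => h0 y).
  rewrite /mu => <-.
  transitivity (\int[pfm]_(y in D) h y)%E; last by [].
  apply: eq_measure_integral => A mA _ /=.
  by symmetry; exact: leb_opp.
rewrite (H (funepos f)) ?(H (funeneg f)) //.
all: try (by move=> y; rewrite ?funepos_ge0 ?funeneg_ge0).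
all: try (by apply: measurable_funepos).
all: try (by apply: measurable_funeneg).
by rewrite /mu; congr (_ - _)%E; apply: eq_integral => x _; rewrite ?funeposE ?funenegE.
Qed.
End Refl.



Section E.
Context {R : realType}.
Lemma ReN (z : R[i]) : Re (- z) = - Re z. Proof. by case: z. Qed.
Lemma ImN (z : R[i]) : Im (- z) = - Im z. Proof. by case: z. Qed.

Lemma intN_fin (D : set R) (h : R -> R) r :
  (\int[mu R]_(x in D) (h x)%:E = r%:E)%E ->
  (\int[mu R]_(x in D) (- h x)%:E = (- r)%:E)%E.
Proof.
move=> H.
have -> : (fun x => (- h x)%:E) = (fun x => - (h x)%:E)%E by [].
rewrite integralN; first by rewrite H.
rewrite integralE in H.
move: H; move: (integral _ _ (funepos _)) => a; move: (integral _ _ (funeneg _)) => b.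
by case: a => [a||]; case: b => [b||].
Qed.

Lemma mcompN (D D' : set R) (f : R -> R) : measurable D ->
  (forall x, D' x <-> D (- x)) -> measurable_fun D f ->
  measurable_fun D' (fun x => f (- x)).
Proof.
move=> mD hD mf; have -> : D' = (-%R) @^-1` D by apply/seteqP; split=> x /hD.
apply: (measurable_comp mD) => //; first by move=> _ [x Dx <-].
Qed.

Lemma L2r_opp (D D' : set R) f : measurable D -> (forall x, D' x <-> D (- x)) ->
  L2r D f -> L2r D' (fun x => f (- x)).
Proof.
move=> mD hD [mf fi]; split; first exact: (mcompN _ _ _ mD hD mf).
have -> : D' = (-%R) @^-1` D by apply/seteqP; split=> x /hD.
rewrite -(@int_opp _ D (fun x => (f x ^+ 2)%:E)) //.
by apply/measurable_EFinP; exact: measurable_funX.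
Qed.

Lemma L2r_N (D : set R) f : L2r D f -> L2r D (fun x => - f x).
Proof.
move=> [mf fi]; split; first exact: measurable_funN.
by under eq_integral do rewrite sqrrN.
Qed.

Lemma L2c_opp (D D' : set R) f : measurable D -> (forall x, D' x <-> D (- x)) ->
  L2c D f -> L2c D' (fun x => f (- x)).
Proof. by move=> mD hD [h1 h2]; split; [exact: (L2r_opp _ _ _ mD hD h1)|exact: (L2r_opp _ _ _ mD hD h2)]. Qed.

Lemma L2c_N (D : set R) f : L2c D f -> L2c D (fun x => - f x).
Proof.
move=> [h1 h2]; split.
- by under [X in L2r _ X]funext do rewrite ReN; apply: L2r_N.
- by under [X in L2r _ X]funext do rewrite ImN; apply: L2r_N.
Qed.

Lemma aeq_opp (T : Type) (D D' : set R) (f g : R -> T) : (forall x, D' x <-> D (- x)) ->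
  aeq D f g -> aeq D' (fun x => f (- x)) (fun x => g (- x)).
Proof.
move=> hD [A [mA A0 sA]]; exists ((-%R) @^-1` A); split.
- by rewrite -[X in measurable X]setTI; exact: mopp.
- by rewrite leb_opp.
- move=> x /= nP; apply: sA => /= h; apply: nP => /hD /h.
  by [].

Qed.

Lemma aeq_trans (T : Type) (D : set R) (f g h : R -> T) :
  aeq D f g -> aeq D g h -> aeq D f h.
Proof.
move=> H1 H2; have := negligibleU H1 H2; apply: negligibleS.
move=> x /= nP; apply/not_andP; apply: contra_not nP => -[h1 h2] Dx.
by rewrite h1 // h2.
Qed.

Lemma preimN_cc (x y : R) : (-%R) @^-1` `[- y, - x] = `[x, y].
Proof.
by apply/seteqP; split=> t /=; rewrite !in_itv /= => /andP[h1 h2]; apply/andP; split; lra.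
Qed.

Lemma ACr_opp (I K K' : set R) (f g : R -> R) : measurable I ->
  (forall x, K' x <-> K (- x)) ->
  (forall x y, K x -> K y -> `]x, y[ `<=` I) -> measurable_fun I g ->
  ACr K f g -> ACr K' (fun x => f (- x)) (fun x => - g (- x)).
Proof.
move=> mI hK hIK mg H x y K'x K'y xy.
have Kx := (hK x).1 K'x; have Ky := (hK y).1 K'y.
have yx : - y <= - x by rewrite lerN2.
rewrite (_ : f (- y) - f (- x) = - (f (- x) - f (- y))); last by rewrite opprB.
apply: (intN_fin _ (fun t => g (- t))).
have mg' : measurable_fun `[- y, - x] g.
  apply: (@measurable_fun_itv_cc _ _ _ false true).
  exact: measurable_funS mI (hIK _ _ Ky Kx) mg.
have := H (- y) (- x) Ky Kx yx.
move=> <-; rewrite [RHS]int_opp //.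
- congr (integral _ _ _); apply/seteqP; split=> t; rewrite /= !inE /= !in_itv /= => /andP[h1 h2];
    apply/andP; split; lra.
- by rewrite set_mem_set.
- by rewrite set_mem_set; exact/measurable_EFinP.
Qed.

Lemma ACr_N (K : set R) (f g : R -> R) :
  ACr K f g -> ACr K (fun x => - f x) (fun x => - g x).
Proof.
move=> H x y Kx Ky xy; rewrite (_ : - f y - - f x = - (f y - f x)); last by rewrite opprB opprK addrC.
exact: intN_fin (H x y Kx Ky xy).
Qed.

Lemma H1c_opp (I I' K K' : set R) (f g : R -> R[i]) : measurable I ->
  (forall x, I' x <-> I (- x)) -> (forall x, K' x <-> K (- x)) ->
  (forall x y, K x -> K y -> `]x, y[ `<=` I) ->
  H1c I K f g -> H1c I' K' (fun x => f (- x)) (fun x => - g (- x)).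
Proof.
move=> mI hI hK hIK [f2 g2 a1 a2]; split.
- exact: L2c_opp mI hI f2.
- exact: L2c_N _ _ (L2c_opp _ _ _ mI hI g2).
- under [X in ACr _ _ X]funext do rewrite ReN.
  by apply: ACr_opp mI hK hIK _ a1; case: g2 => [[]].
- under [X in ACr _ _ X]funext do rewrite ImN.
  by apply: ACr_opp mI hK hIK _ a2; case: g2 => _ [].
Qed.

Lemma H1c_N (I K : set R) (f g : R -> R[i]) :
  H1c I K f g -> H1c I K (fun x => - f x) (fun x => - g x).
Proof.
move=> [f2 g2 a1 a2]; split.
- exact: L2c_N.
- exact: L2c_N.
- have -> : (fun x => Re (- f x)) = (fun x => - Re (f x)) by apply: funext => x; rewrite ReN.
  have -> : (fun x => Re (- g x)) = (fun x => - Re (g x)) by apply: funext => x; rewrite ReN.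
  exact: ACr_N.
- have -> : (fun x => Im (- f x)) = (fun x => - Im (f x)) by apply: funext => x; rewrite ImN.
  have -> : (fun x => Im (- g x)) = (fun x => - Im (g x)) by apply: funext => x; rewrite ImN.
  exact: ACr_N.
Qed.
End E.



Section G.
Context {R : realType} (G : mgraph R) (Jm : {set edge G}).

Lemma Ij_rev j : j \in Jm -> forall x, Ij (revG Jm) j x <-> Ij G j (- x).
Proof.
case: j => [i|e] hJ x; rewrite /Ij /= hJ ?set_mem_set /=.
  by rewrite !in_setE /= !in_itv /=; split => /andP[h1 h2]; apply/andP; split; lra.
by case: (einit G e) => /=; rewrite !in_itv /= ?andbT; split => h; lra.
Qed.

Lemma Kj_rev j : j \in Jm -> forall x, Kj (revG Jm) j x <-> Kj G j (- x).
Proof.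
case: j => [i|e] hJ x; rewrite /Kj /= hJ ?set_mem_set /=.
  by rewrite !in_setE /= !in_itv /=; split => /andP[h1 h2]; apply/andP; split; lra.
by case: (einit G e) => /=; rewrite !in_itv /= ?andbT; split => h; lra.
Qed.

Lemma Ij_revN j : j \notin Jm -> Ij (revG Jm) j = Ij G j.
Proof. by case: j => [i|e] hJ; rewrite /Ij /= (negbTE hJ). Qed.

Lemma Kj_revN j : j \notin Jm -> Kj (revG Jm) j = Kj G j.
Proof. by case: j => [i|e] hJ; rewrite /Kj /= (negbTE hJ). Qed.
End G.

Lemma KI {R : realType} (G : mgraph R) j x y : Kj G j x -> Kj G j y -> `]x, y[ `<=` Ij G j.
Proof.
case: j => [i|e]; rewrite /Kj /Ij ?set_mem_set /=.
  move=> /= hx hy t; rewrite /= !in_itv /=; move: hx hy; rewrite /= !in_itv /=.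
  by move=> /andP[h1 h2] /andP[h3 h4] /andP[h5 h6]; apply/andP; split; lra.
case: (einit G e) => /=; rewrite ?set_mem_set /=;
  move=> hx hy t; rewrite /= !in_itv /= ?andbT; move: hx hy; rewrite /= !in_itv /= ?andbT;
  move=> h1 h2 /andP[h5 h6]; lra.
Qed.

Lemma mIj {R : realType} (G : mgraph R) j : measurable (Ij G j).
Proof. by case: j => [i|e]; rewrite /Ij ?set_mem_set //; case: (einit G e). Qed.



Section W.
Context {R : realType} (G : mgraph R) (Jm : {set edge G}).
Hypothesis wfG : wf G.

Lemma srctgt i : (src G i == tgt G i) = false.
Proof. by case: wfG => _ h _ _; apply/negbTE/h. Qed.

Lemma Wmap_Gam1 (X : state G) :
  Wmap (G := revG Jm) (fun k : Fidx G => val k) (Gam1 (G := revG Jm) (Pmap Jm X)) =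
  Wmap (G := G) (fun k : Fidx G => val k) (Gam1 X).
Proof.
apply: funext => -[[j v] hk]; rewrite /Wmap /=.
case: j hk => [i|e] hk /=; rewrite /end_at /=; case hJ: (_ \in Jm) => /=.
- move: hk; rewrite /inc /= => /orP[] /eqP ->; rewrite ?eqxx ?srctgt 1?eq_sym ?srctgt /Gam1 /Pmap /= hJ /= opprK //.
- by rewrite /Gam1 /Pmap /= hJ.
- by rewrite /Gam1 /Pmap /= hJ /= opprK.
- by rewrite /Gam1 /Pmap /= hJ.
Qed.

Lemma Wmap_Gam2 (X : state G) :
  Wmap (G := revG Jm) (fun k : Fidx G => val k) (Gam2 (G := revG Jm) (Pmap Jm X)) =
  Wmap (G := G) (fun k : Fidx G => val k) (Gam2 X).
Proof.
apply: funext => -[[j v] hk]; rewrite /Wmap /=.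
case: j hk => [i|e] hk /=; rewrite /end_at /=; case hJ: (_ \in Jm) => /=.
- move: hk; rewrite /inc /= => /orP[] /eqP ->; rewrite ?eqxx ?srctgt 1?eq_sym ?srctgt /Gam2 /= /Pmap /= hJ /= opprK.
  + by rewrite ?mulrNN ?mulrN ?mulNr.
  + by rewrite ?mulrNN ?mulrN ?mulNr.
- by rewrite /Gam2 /= /Pmap /= hJ.
- rewrite /Gam2 /rho /= /Pmap /= hJ /= opprK.
  by case: (einit G e) => /=; rewrite ?mulrN ?mulNr ?mulr1 ?mulrN1 ?opprK.
- by rewrite /Gam2 /rho /= /Pmap /= hJ.
Qed.
End W.



Section A.
Context {R : realType}.

Lemma aeq_imp (T U : Type) (D : set R) (f g : R -> T) (f' g' : R -> U) :
  aeq D f g -> (forall x, D x -> f x = g x -> f' x = g' x) -> aeq D f' g'.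
Proof.
move=> H1 H; apply: negligibleS H1 => x /= nP h; apply: nP => Dx.
exact: H x Dx (h Dx).
Qed.

Lemma aeq_eq (T : Type) (D : set R) (f g : R -> T) :
  (forall x, D x -> f x = g x) -> aeq D f g.
Proof.
move=> H; exists set0; split => //.
by move=> x /= nP; apply: nP; exact: H.
Qed.

Lemma aeq_core (I I' : set R) (X Y : R -> R[i] * R[i]) :
  (forall x, I' x <-> I (- x)) -> aeq I X Y ->
  aeq I' (fun x => ((X (- x)).1, - (X (- x)).2)) (fun x => ((Y (- x)).1, - (Y (- x)).2)).
Proof.
move=> hI h; apply: aeq_imp (aeq_opp _ _ _ _ _ hI h) _.
by move=> x _ ->.
Qed.

Lemma H1_core (I I' K K' : set R) (X Y : R -> R[i] * R[i]) : measurable I ->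
  (forall x, I' x <-> I (- x)) -> (forall x, K' x <-> K (- x)) ->
  (forall x y, K x -> K y -> `]x, y[ `<=` I) ->
  H1c I K (fun x => (X x).1) (fun x => (Y x).1) /\
  H1c I K (fun x => (X x).2) (fun x => (Y x).2) ->
  H1c I' K' (fun x => (X (- x)).1) (fun x => - (Y (- x)).1) /\
  H1c I' K' (fun x => - (X (- x)).2) (fun x => (Y (- x)).2).
Proof.
move=> mI hI hK hIK [h1 h2]; split.
  exact: (H1c_opp _ _ _ _ _ _ mI hI hK hIK h1).
have := H1c_N _ _ _ _ (H1c_opp _ _ _ _ _ _ mI hI hK hIK h2).
have -> // : (fun x => - - (Y (- x)).2) = (fun x => (Y (- x)).2).
by apply: funext => x; rewrite opprK.
Qed.
End A.

Arguments Ij_rev {R G Jm j}.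
Arguments Kj_rev {R G Jm j}.
Arguments Ij_revN {R G Jm j}.
Arguments Kj_revN {R G Jm j}.
Section B.
Context {R : realType} (G : mgraph R) (Jm : {set edge G}).
Local Notation Gt := (revG Jm).

Definition Qmap (Phi : state G) : state G :=
  fun j x => if j \in Jm then (- (Phi j (- x)).1, (Phi j (- x)).2) else Phi j x.

Lemma PmapK (X : state G) : Pmap Jm (Pmap Jm X) = X.
Proof.
apply: funext => j; apply: funext => x; rewrite /Pmap; case: (j \in Jm) => //=.
by rewrite !opprK; case: (X j x).
Qed.

Lemma Ij_rev' j : j \in Jm -> forall x, Ij G j x <-> Ij Gt j (- x).
Proof. by move=> hJ x; rewrite (Ij_rev (G:=G) hJ) opprK. Qed.
Lemma Kj_rev' j : j \in Jm -> forall x, Kj G j x <-> Kj Gt j (- x).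
Proof. by move=> hJ x; rewrite (Kj_rev (G:=G) hJ) opprK. Qed.

Lemma aeqP1 j (X Y : state G) : aeq (Ij Gt j) (X j) (Y j) -> aeq (Ij G j) (Pmap Jm X j) (Pmap Jm Y j).
Proof.
case hJ: (j \in Jm); rewrite /Pmap hJ.
  exact: aeq_core _ _ _ _ (Ij_rev' _ hJ).
by rewrite (Ij_revN (G:=G) (negbT hJ)).
Qed.

Lemma aeqP2 j (X Y : state G) : aeq (Ij G j) (X j) (Y j) -> aeq (Ij Gt j) (Pmap Jm X j) (Pmap Jm Y j).
Proof.
case hJ: (j \in Jm); rewrite /Pmap hJ.
  exact: aeq_core _ _ _ _ (Ij_rev (G:=G) hJ).
by rewrite (Ij_revN (G:=G) (negbT hJ)).
Qed.

Lemma H1P1 j (X Y : state G) :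
  H1c (Ij Gt j) (Kj Gt j) (fun x => (X j x).1) (fun x => (Y j x).1) /\
  H1c (Ij Gt j) (Kj Gt j) (fun x => (X j x).2) (fun x => (Y j x).2) ->
  H1c (Ij G j) (Kj G j) (fun x => (Pmap Jm X j x).1) (fun x => (Qmap Y j x).1) /\
  H1c (Ij G j) (Kj G j) (fun x => (Pmap Jm X j x).2) (fun x => (Qmap Y j x).2).
Proof.
case hJ: (j \in Jm); rewrite /Pmap /Qmap hJ /=.
  exact: H1_core _ _ _ _ _ _ (mIj Gt j) (Ij_rev' _ hJ) (Kj_rev' _ hJ) (@KI _ Gt j).
by rewrite (Ij_revN (G:=G) (negbT hJ)) (Kj_revN (G:=G) (negbT hJ)).
Qed.

Lemma H1P2 j (X Y : state G) :
  H1c (Ij G j) (Kj G j) (fun x => (X j x).1) (fun x => (Y j x).1) /\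
  H1c (Ij G j) (Kj G j) (fun x => (X j x).2) (fun x => (Y j x).2) ->
  H1c (Ij Gt j) (Kj Gt j) (fun x => (Pmap Jm X j x).1) (fun x => (Qmap Y j x).1) /\
  H1c (Ij Gt j) (Kj Gt j) (fun x => (Pmap Jm X j x).2) (fun x => (Qmap Y j x).2).
Proof.
case hJ: (j \in Jm); rewrite /Pmap /Qmap hJ /=.
  exact: H1_core _ _ _ _ _ _ (mIj G j) (Ij_rev (G:=G) hJ) (Kj_rev (G:=G) hJ) (@KI _ G j).
by rewrite (Ij_revN (G:=G) (negbT hJ)) (Kj_revN (G:=G) (negbT hJ)).
Qed.

Lemma Dmax_PQ m (X Y : state G) j x :
  Pmap Jm (fun j x => Dmax m (X j x) (Y j x)) j x = Dmax m (Pmap Jm X j x) (Qmap Y j x).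
Proof.
rewrite /Pmap /Qmap /Dmax; case: ifP => // _ /=; congr (_, _).
  by rewrite !mulrN opprD !opprK.
Qed.

Lemma L2_P (X : state G) : L2 X -> L2 (G := Gt) (Pmap Jm X).
Proof.
move=> h j; case hJ: (j \in Jm); rewrite /Pmap hJ /=.
  split; first exact: (L2c_opp _ _ _ (mIj G j) (Ij_rev (G:=G) hJ) (h j).1).
  exact: L2c_N _ _ (L2c_opp _ _ _ (mIj G j) (Ij_rev (G:=G) hJ) (h j).2).
by rewrite (Ij_revN (G:=G) (negbT hJ)); exact: h.
Qed.

Lemma L2_P' (X : state G) : L2 (G := Gt) X -> L2 (Pmap Jm X).
Proof.
move=> h j; case hJ: (j \in Jm); rewrite /Pmap hJ /=.
  split; first exact: (L2c_opp _ _ _ (mIj Gt j) (Ij_rev' _ hJ) (h j).1).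
  exact: L2c_N _ _ (L2c_opp _ _ _ (mIj Gt j) (Ij_rev' _ hJ) (h j).2).
by rewrite -(Ij_revN (G:=G) (negbT hJ)); exact: h.
Qed.

Lemma norm_P (X : state G) : L2 X -> norm2 (G := Gt) (Pmap Jm X) = norm2 X.
Proof.
move=> h; rewrite /norm2; apply: eq_bigr => j _.
case hJ: (j \in Jm); rewrite /Pmap hJ; last by rewrite (Ij_revN (G:=G) (negbT hJ)).
have E x : sqn ((X j (- x)).1, - (X j (- x)).2) = sqn (X j (- x)).
  by rewrite /sqn /= ReN ImN !sqrrN.
under eq_integral do rewrite E.
have -> : Ij Gt j = (-%R) @^-1` (Ij G j).
  by apply/seteqP; split => x /(Ij_rev (G:=G) hJ).
rewrite [RHS]int_opp //; first exact: mIj.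
apply/measurable_EFinP; rewrite /sqn.
case: (h j) => -[[m1 _] [m2 _]] [[m3 _] [m4 _]].
by repeat apply: measurable_funD; apply: measurable_funX.
Qed.
End B.



Theorem theorem4p6 (R : realType) (G : mgraph R) (Jm : {set edge G})
  (Lam : (Fidx G -> R[i]) -> (Fidx G -> R[i]) -> Prop) (m : R) :
  wf G -> 0 <= m -> lin_rel Lam ->
  let Gt := revG Jm in
  (forall Phi Psi : state G, L2 (G := Gt) Psi ->
     DLam (G := Gt) (fun k : Fidx G => val k) Lam m (Pmap Jm Phi) Psi <->
     exists Psi' : state G,
       DLam (G := G) (fun k : Fidx G => val k) Lam m Phi Psi' /\
       forall j, aeq (Ij Gt j) (Psi j) (Pmap Jm Psi' j)) /\
  (forall Phi : state G, L2 Phi ->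
     L2 (G := Gt) (Pmap Jm Phi) /\ norm2 (G := Gt) (Pmap Jm Phi) = norm2 Phi) /\
  (forall Phit : state G, L2 (G := Gt) Phit ->
     exists Phi : state G, L2 Phi /\ forall j, aeq (Ij Gt j) (Pmap Jm Phi j) (Phit j)).
Proof.
move=> wfG _ _ Gt; rewrite {}/Gt; split; last split.
- move=> Phi Psi hPsi; split.
  + move=> [L2P L2Psi [Phi0 [Phi1 [ae0 H1 hL aeD]]]].
    exists (Pmap Jm Psi); split; last first.
      by move=> j; rewrite PmapK; apply: aeq_eq.
    split.
    * by rewrite -(PmapK G Jm Phi); exact: L2_P'.
    * exact: L2_P'.
    * exists (Pmap Jm Phi0), (Qmap G Jm Phi1); split.
      - by move=> j; have := aeqP1 _ _ j _ _ (ae0 j); rewrite PmapK.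
      - by move=> j; exact: H1P1.
      - by rewrite -(Wmap_Gam1 G Jm wfG) -(Wmap_Gam2 G Jm wfG) !PmapK.
      - move=> j; apply: aeq_imp (aeqP1 _ _ j Psi (fun j x => Dmax m (Phi0 j x) (Phi1 j x)) (aeD j)) _.
        by move=> x _ ->; rewrite Dmax_PQ.
  + move=> [Psi' [[L2Phi L2Psi' [Phi0 [Phi1 [ae0 H1 hL aeD]]]] aePsi]].
    split.
    * exact: L2_P.
    * exact: hPsi.
    * exists (Pmap Jm Phi0), (Qmap G Jm Phi1); split.
      - by move=> j; exact: aeqP2.
      - by move=> j; exact: H1P2.
      - by rewrite (Wmap_Gam1 G Jm wfG) (Wmap_Gam2 G Jm wfG).
      - move=> j; apply: aeq_trans (aePsi j) _.
        apply: (aeq_imp _ _ _ _ _ _ _ (aeqP2 G Jm j Psi' (fun j x => Dmax m (Phi0 j x) (Phi1 j x)) (aeD j))).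
        by move=> x _ ->; rewrite Dmax_PQ.
- by move=> Phi h; split; [exact: L2_P | exact: norm_P].
- move=> Phit h; exists (Pmap Jm Phit); split; first exact: L2_P'.
  by move=> j; rewrite PmapK; apply: aeq_eq.
Qed.
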